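(* Let $\mathbf A$ be a residuated semigroup and let $\mathrm{Idp}(\mathbf A)$ be its set of positive idempotents. For $p\in\mathrm{Idp}(\mathbf A)$ put $A_p:=\{a\in A: a\backslash a=p\}$ and ${}_pA:=\{a\in A: a/a=p\}$. The following are equivalent: (1) $\mathbf A$ satisfies $y\le (x/x)y$ and $y\le y(x\backslash x)$ for all $x,y\in A$; (2) every element of the form $a\backslash a$ or $a/a$ ($a\in A$) is positive; (3) $\mathrm{Idp}(\mathbf A)=\{a/a: a\in A\}=\{a\backslash a: a\in A\}$; (4) both families $\{{}_pA: p\in\mathrm{Idp}(\mathbf A)\}$ and $\{A_p: p\in\mathrm{Idp}(\mathbf A)\}$ are partitions of $A$ (i.e. their members cover $A$ and are pairwise disjoint).
   Context: A residuated semigroup is a structure $\langle A,\le,\cdot,\backslash,/\rangle$ where $\langle A,\le\rangle$ is a poset, $\langle A,\cdot\rangle$ is a semigroup (we write $xy$ for $x\cdot y$), and for all $x,y,z$: $xy\le z\iff x\le z/y\iff y\le x\backslash z$. An element $p$ is positive if $a\le pa$ and $a\le ap$ for all $a\in A$; it is idempotent if $pp=p$. *)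

(* Defs.v *)
(* A residuated semigroup <A, <=, ., \, />.
   ldiv x z = x\z, rdiv z y = z/y. *)
Record ResSemigroup := {
  carrier :> Type;
  le : carrier -> carrier -> Prop;
  mul : carrier -> carrier -> carrier;
  ldiv : carrier -> carrier -> carrier;
  rdiv : carrier -> carrier -> carrier;
  le_refl : forall x, le x x;
  le_trans : forall x y z, le x y -> le y z -> le x z;
  le_antisym : forall x y, le x y -> le y x -> x = y;
  mul_assoc : forall x y z, mul (mul x y) z = mul x (mul y z);
  res_rdiv : forall x y z, le (mul x y) z <-> le x (rdiv z y);
  res_ldiv : forall x y z, le (mul x y) z <-> le y (ldiv x z)
}.

Arguments le {_}.
Arguments mul {_}.
Arguments ldiv {_}.
Arguments rdiv {_}.

Definition positive (A : ResSemigroup) (p : A) : Prop :=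
  forall a : A, le a (mul p a) /\ le a (mul a p).

Definition idempotent (A : ResSemigroup) (p : A) : Prop := mul p p = p.

Definition Idp (A : ResSemigroup) (p : A) : Prop := positive A p /\ idempotent A p.

Definition Ablock_l (A : ResSemigroup) (p : A) (a : A) : Prop := ldiv a a = p.
Definition Ablock_r (A : ResSemigroup) (p : A) (a : A) : Prop := rdiv a a = p.

Definition partition_family (A : ResSemigroup) (B : A -> A -> Prop) : Prop :=
  (forall a : A, exists p, Idp A p /\ B p a) /\
  (forall p q : A, Idp A p -> Idp A q -> p <> q ->
     forall a : A, ~ (B p a /\ B q a)).

(* Main.v *)
Require Import Defs.

Section S.
Variable A : ResSemigroup.

Lemma monl (a b c : A) : le a b -> le (mul c a) (mul c b).
Proof. intro H. apply (proj2 (res_ldiv _ _ _ _)). eapply le_trans; [exact H|]. apply (proj1 (res_ldiv _ _ _ _)), le_refl. Qed.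
Lemma monr (a b c : A) : le a b -> le (mul a c) (mul b c).
Proof. intro H. apply (proj2 (res_rdiv _ _ _ _)). eapply le_trans; [exact H|]. apply (proj1 (res_rdiv _ _ _ _)), le_refl. Qed.
Lemma L1 (x : A) : le (mul (rdiv x x) x) x.
Proof. apply (proj2 (res_rdiv _ _ _ _)), le_refl. Qed.
Lemma L2 (x : A) : le (mul x (ldiv x x)) x.
Proof. apply (proj2 (res_ldiv _ _ _ _)), le_refl. Qed.
Lemma subr (x : A) : le (mul (rdiv x x) (rdiv x x)) (rdiv x x).
Proof. apply (proj1 (res_rdiv _ _ _ _)). rewrite (mul_assoc A). eapply le_trans; [apply monl, L1|apply L1]. Qed.
Lemma subl (x : A) : le (mul (ldiv x x) (ldiv x x)) (ldiv x x).
Proof. apply (proj1 (res_ldiv _ _ _ _)). rewrite <- (mul_assoc A). eapply le_trans; [apply monr, L2|apply L2]. Qed.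
Lemma rfix (p : A) : (forall a, le a (mul a p)) -> le (mul p p) p -> rdiv p p = p.
Proof. intros H1 H2. apply le_antisym.
  - eapply le_trans; [apply H1|apply L1].
  - apply (proj1 (res_rdiv _ _ _ _)); exact H2. Qed.
Lemma lfix (p : A) : (forall a, le a (mul p a)) -> le (mul p p) p -> ldiv p p = p.
Proof. intros H1 H2. apply le_antisym.
  - eapply le_trans; [apply H1|apply L2].
  - apply (proj1 (res_ldiv _ _ _ _)); exact H2. Qed.
Lemma idp_r (p : A) : Idp A p -> rdiv p p = p.
Proof. intros [Hp Hi]. apply rfix; [intro a; apply Hp|]. unfold idempotent in Hi; rewrite Hi; apply le_refl. Qed.
Lemma idp_l (p : A) : Idp A p -> ldiv p p = p.
Proof. intros [Hp Hi]. apply lfix; [intro a; apply Hp|]. unfold idempotent in Hi; rewrite Hi; apply le_refl. Qed.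
Lemma pos_idp_r (a : A) : positive A (rdiv a a) -> Idp A (rdiv a a).
Proof. intro H. split; [exact H|]. apply le_antisym; [apply subr|apply H]. Qed.
Lemma pos_idp_l (a : A) : positive A (ldiv a a) -> Idp A (ldiv a a).
Proof. intro H. split; [exact H|]. apply le_antisym; [apply subl|apply H]. Qed.
End S.

Theorem lemma3p1 (A : ResSemigroup) :
  let P1 := forall x y : A, le y (mul (rdiv x x) y) /\ le y (mul y (ldiv x x)) in
  let P2 := forall a : A, positive A (ldiv a a) /\ positive A (rdiv a a) in
  let P3 := (forall p : A, Idp A p <-> exists a : A, p = rdiv a a) /\
            (forall p : A, Idp A p <-> exists a : A, p = ldiv a a) in
  let P4 := partition_family A (Ablock_r A) /\ partition_family A (Ablock_l A) in
  (P1 <-> P2) /\ (P2 <-> P3) /\ (P3 <-> P4).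
Proof.
  intros P1 P2 P3 P4. split; [|split].
  - split.
    + intros H a. split; intro y; split.
      * assert (E : rdiv (ldiv a a) (ldiv a a) = ldiv a a).
        { apply rfix; [intro b; apply H | apply subl]. }
        rewrite <- E. apply H.
      * apply H.
      * apply H.
      * assert (E : ldiv (rdiv a a) (rdiv a a) = rdiv a a).
        { apply lfix; [intro b; apply H | apply subr]. }
        rewrite <- E. apply H.
    + intros H x y. split; [apply (proj2 (H x)) | apply (proj1 (H x))].
  - split.
    + intro H. split; intro p; split.
      * intro Hp. exists p. symmetry. apply idp_r; exact Hp.
      * intros [a ->]. apply pos_idp_r, H.
      * intro Hp. exists p. symmetry. apply idp_l; exact Hp.
      * intros [a ->]. apply pos_idp_l, H.
    + intros [H1 H2] a. split.
      * apply (proj2 (H2 (ldiv a a))). eauto.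
      * apply (proj2 (H1 (rdiv a a))). eauto.
  - split.
    + intros [H1 H2]. split; split.
      * intro a. exists (rdiv a a). split; [apply H1; eauto | reflexivity].
      * intros p q _ _ Hne a [E1 E2]. apply Hne. unfold Ablock_r in *. congruence.
      * intro a. exists (ldiv a a). split; [apply H2; eauto | reflexivity].
      * intros p q _ _ Hne a [E1 E2]. apply Hne. unfold Ablock_l in *. congruence.
    + intros [[C1 _] [C2 _]]. split; intro p; split.
      * intro Hp. exists p. symmetry. apply idp_r; exact Hp.
      * intros [a ->]. destruct (C1 a) as [q [Hq E]]. unfold Ablock_r in E. rewrite E. exact Hq.
      * intro Hp. exists p. symmetry. apply idp_l; exact Hp.
      * intros [a ->]. destruct (C2 a) as [q [Hq E]]. unfold Ablock_l in E. rewrite E. exact Hq.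
Qed.
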